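(* Let $(Q,Sp,I)$ be a skew-gentle triple. Then there is an isomorphism of $k$-vector spaces $kQ^{sp}/\langle I^{sg}\rangle\cong kQ^{sp}/\langle I^{sp}\rangle$. In particular $kQ^{sp}/\langle I^{sg}\rangle$ is finite dimensional if and only if $kQ^{sp}/\langle I^{sp}\rangle$ is finite dimensional.
   Context: $k$ is an algebraically closed field; quivers are finite and paths are composed right to left. A pair $(Q,I)$ with $I$ a set of paths of $Q$ is a gentle pair if: (G1) each vertex is the start of at most two arrows and the target of at most two arrows; (G2) every path in $I$ has length $2$; (G3) for each arrow $\alpha$ there is at most one arrow $\beta$ with $\beta\alpha\in I$ and at most one arrow $\gamma$ with $\gamma\alpha$ a path not in $I$; (G4) for each arrow $\alpha$ there is at most one arrow $\beta$ with $\alpha\beta\in I$ and at most one arrow $\gamma$ with $\alpha\gamma$ a path not in $I$. A triple $(Q,Sp,I)$ with $Q$ a quiver, $Sp\subseteq Q_0$ and $I$ a set of paths in $Q$ is skew-gentle if $(Q^{sp},I^{sp})$ is a gentle pair, where $Q^{sp}$ has vertices $Q_0$ and arrows $Q_1\cup\{\epsilon_i\mid i\in Sp\}$ with $\epsilon_i$ a new loop at $i$ (special loops), and $I^{sp}=I\cup\{\epsilon_i^2\mid i\in Sp\}$. Set $I^{sg}=I\cup\{\epsilon_i^2-\epsilon_i\mid i\in Sp\}$; $\langle X\rangle$ denotes the ideal of $kQ^{sp}$ generated by $X$. *)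

(* Defs.v *)
From HB Require Import structures.
From mathcomp Require Import all_boot all_order all_algebra.
From mathcomp Require Import finmap.
From mathcomp.multinomials Require Import monalg.
Set Implicit Arguments. Unset Strict Implicit. Unset Printing Implicit Defensive.
Import Order.TTheory GRing.Theory.
Local Open Scope ring_scope.

Section SkewGentle.
Variables (Q0 Q1 : finType) (src tgt : Q1 -> Q0) (Sp : {set Q0}).

(* Arrows of Q^sp: inl a for a in Q1, inr i for the special loop eps_i
   (only meaningful when i \in Sp). *)
Definition sarrow := (Q1 + Q0)%type.
Definition ssrc (a : sarrow) : Q0 := match a with inl b => src b | inr i => i end.
Definition stgt (a : sarrow) : Q0 := match a with inl b => tgt b | inr i => i end.
Definition sarrow_valid (a : sarrow) : bool :=
  match a with inl _ => true | inr i => i \in Sp end.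

(* Raw paths: (start vertex, arrows in ORDER OF TRAVERSAL).  The path written
   beta alpha in the paper (alpha first, right-to-left composition) is
   represented by (ssrc alpha, [:: alpha; beta]).  (v, [::]) is the trivial
   path e_v. *)
Definition rpath := (Q0 * seq sarrow)%type.
Definition rpath_valid (r : rpath) : bool :=
  all sarrow_valid r.2 &&
  (if r.2 is a :: s then (ssrc a == r.1) && path (fun x y => stgt x == ssrc y) a s
   else true).
Definition rpath_end (r : rpath) : Q0 := if r.2 is a :: s then stgt (last a s) else r.1.

Definition qpath := {r : rpath | rpath_valid r}.

Definition pathalg (k : fieldType) := {malg k[qpath]}.

(* concatenation: p first, then q  (i.e. the paper's product q p) *)
Definition pcat (p q : qpath) : option qpath :=
  if rpath_end (val p) == (val q).1 then
    insub ((val p).1, (val p).2 ++ (val q).2) else None.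

(* multiplication in k Q^sp, paths composed right to left: in (x * y), y acts first *)
Definition pmul (k : fieldType) (x y : pathalg k) : pathalg k :=
  \sum_(p <- msupp x) \sum_(q <- msupp y)
     (x@_p * y@_q) *: (match pcat q p with Some r => mkmalgU r 1 | None => 0 end).

Definition gen_ideal (k : fieldType) (X : pathalg k -> Prop) (a : pathalg k) : Prop :=
  exists s : seq (k * qpath * pathalg k * qpath),
    (forall t, t \in s -> X t.1.2) /\
    a = \sum_(t <- s) t.1.1.1 *: pmul (pmul (mkmalgU t.1.1.2 1) t.1.2) (mkmalgU t.2 1).

Definition Isp (I : pred rpath) (r : rpath) : bool :=
  I r || [exists i, (i \in Sp) && (r == (i, [:: inr i; inr i]))].

Definition gens_sp (k : fieldType) (I : pred rpath) (a : pathalg k) : Prop :=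
  (exists p : qpath, I (val p) /\ a = mkmalgU p 1) \/
  (exists (i : Q0) (p2 : qpath), val p2 = (i, [:: inr i; inr i]) /\ a = mkmalgU p2 1).

Definition gens_sg (k : fieldType) (I : pred rpath) (a : pathalg k) : Prop :=
  (exists p : qpath, I (val p) /\ a = mkmalgU p 1) \/
  (exists (i : Q0) (p2 p1 : qpath), val p2 = (i, [:: inr i; inr i]) /\
      val p1 = (i, [:: inr i]) /\ a = mkmalgU p2 1 - mkmalgU p1 1).

Definition gentle_sp (I : pred rpath) : Prop :=
  (forall v : Q0, #|[pred a | sarrow_valid a && (ssrc a == v)]| <= 2)%N /\
  (forall v : Q0, #|[pred a | sarrow_valid a && (stgt a == v)]| <= 2)%N /\
  (forall r, Isp I r -> size r.2 = 2%N) /\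
  (forall al, sarrow_valid al ->
     (#|[pred be | sarrow_valid be && (stgt al == ssrc be)
                    && Isp I (ssrc al, [:: al; be])]| <= 1)%N /\
     (#|[pred ga | sarrow_valid ga && (stgt al == ssrc ga)
                    && ~~ Isp I (ssrc al, [:: al; ga])]| <= 1)%N) /\
  (forall al, sarrow_valid al ->
     (#|[pred be | sarrow_valid be && (stgt be == ssrc al)
                    && Isp I (ssrc be, [:: be; al])]| <= 1)%N /\
     (#|[pred ga | sarrow_valid ga && (stgt ga == ssrc al)
                    && ~~ Isp I (ssrc ga, [:: ga; al])]| <= 1)%N).

Definition skew_gentle (I : pred rpath) : Prop :=
  (forall r, I r -> rpath_valid r /\ all (fun a => if a is inl _ then true else false) r.2)
  /\ gentle_sp I.

(* k-linear isomorphism A/J1 ~= A/J2 : a linear map f : A -> A inducing a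
   well-defined bijection between the quotients *)
Definition quot_iso (k : fieldType) (J1 J2 : pathalg k -> Prop) : Prop :=
  exists f : {linear pathalg k -> pathalg k},
    (forall x, J2 (f x) <-> J1 x) /\ (forall y, exists x, J2 (y - f x)).

Definition quot_findim (k : fieldType) (J : pathalg k -> Prop) : Prop :=
  exists (n : nat) (b : 'I_n -> pathalg k),
    forall x, exists c : 'I_n -> k, J (x - \sum_(i < n) c i *: b i).

End SkewGentle.

(* Main.v *)
Require Import Defs.
From HB Require Import structures.
From mathcomp Require Import all_boot all_order all_algebra.
From mathcomp Require Import finmap.
From mathcomp.multinomials Require Import monalg.
From mathcomp Require Import zify.
From Stdlib Require Import Lia ClassicalEpsilon.
Set Implicit Arguments. Unset Strict Implicit. Unset Printing Implicit Defensive.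
Import Order.TTheory GRing.Theory.
Local Open Scope ring_scope.

Section Paths.
Variables (Q0 Q1 : finType) (src tgt : Q1 -> Q0) (Sp : {set Q0}).
Local Notation sarr := (sarrow Q0 Q1).
Local Notation ssrc := (ssrc src).
Local Notation stgt := (stgt tgt).
Local Notation valid := (rpath_valid src tgt Sp).

Definition conn (x y : sarr) := stgt x == ssrc y.
Definition connf (v : Q0) (s : seq sarr) :=
  if s is a :: s' then (ssrc a == v) && path conn a s' else true.

Lemma validE v s : valid (v, s) = all (sarrow_valid Sp) s && connf v s.
Proof. by []. Qed.

Lemma path_connf x s : path conn x s = connf (stgt x) s.
Proof. by case: s => //= b s; rewrite /conn eq_sym. Qed.

Definition pend' v (s : seq sarr) := if s is a :: s' then stgt (last a s') else v.
Lemma pendE v s : rpath_end tgt (v, s) = pend' v s. Proof. by []. Qed.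

Lemma connf_cat v s1 s2 : connf v (s1 ++ s2) = connf v s1 && connf (pend' v s1) s2.
Proof. case: s1 => [|a s1] //=. by rewrite cat_path [path conn (last _ _) _]path_connf andbA. Qed.

Lemma pend_cat v s1 s2 : pend' v (s1 ++ s2) = pend' (pend' v s1) s2.
Proof.
case: s1 => [|a s1] //; case: s2 => [|b s2]; first by rewrite cats0.
by rewrite /= last_cat.
Qed.

Lemma valid_cat v s1 s2 : valid (v, s1 ++ s2) = valid (v, s1) && valid (pend' v s1, s2).
Proof.
rewrite !validE all_cat connf_cat.
by move: (all _ s1) (all _ s2) (connf v s1) (connf (pend' v s1) s2) => [] [] [] [].
Qed.

Lemma valid_head w x s : valid (w, x :: s) -> ssrc x = w.
Proof. by rewrite validE /= => /andP[_ /andP[/eqP]]. Qed.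

Lemma valid_drop_loop v s1 a s3 : ssrc a = stgt a ->
  valid (v, s1 ++ a :: a :: s3) -> valid (v, s1 ++ a :: s3).
Proof.
move=> la; rewrite !valid_cat => /andP[-> ]; rewrite !validE /=.
case/andP => /and3P[-> _ ->] /andP[-> /andP[_ ->]]; by [].
Qed.

Lemma valid_inr v s1 i j s3 : valid (v, s1 ++ inr i :: inr j :: s3) -> j = i.
Proof.
rewrite valid_cat => /andP[_]; rewrite validE /= => /andP[_ /and3P[_ /eqP e _]]; exact: (esym e).
Qed.

Lemma not_sorted_split (T : Type) (r : rel T) s :
  ~~ sorted r s -> exists s1 x y s3, s = s1 ++ x :: y :: s3 /\ ~~ r x y.
Proof.
elim: s => [|x s IH] //=. case: s IH => [|y s] IH //=. rewrite negb_and => /orP[H|H].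
- by exists [::], x, y, s.
- have [s1 [x' [y' [s3 [E H']]]]] := IH H. by exists (x :: s1), x', y', s3; rewrite E.
Qed.

Lemma sorted_split_bad (T : Type) (r : rel T) s1 x y s3 :
  ~~ r x y -> ~~ sorted r (s1 ++ x :: y :: s3).
Proof. move=> H; apply/negP => /cat_sorted2 [_] /=. by rewrite (negbTE H). Qed.

Lemma sorted_drop (T : Type) (r : rel T) (P : pred T) s1 a b s3 :
  (forall z w, P w -> r z w) -> P a -> P b ->
  sorted r (s1 ++ a :: b :: s3) = sorted r (s1 ++ b :: s3).
Proof.
move=> H pa pb; case: s1 => [|c s1] /=; first by rewrite H.
by rewrite !cat_path /= !H.
Qed.

Definition isinr (a : sarr) := if a is inr _ then true else false.
Fixpoint ecol (s : seq sarr) : seq sarr :=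
  if s is a :: s' then
    (if s' is b :: _ then (if isinr a && isinr b then ecol s' else a :: ecol s') else [:: a])
  else [::].

Lemma ecol_cons2 a b s : ecol (a :: b :: s) =
  if isinr a && isinr b then ecol (b :: s) else a :: ecol (b :: s).
Proof. by []. Qed.

Lemma ecol_step s1 a b s3 : isinr a -> isinr b ->
  ecol (s1 ++ a :: b :: s3) = ecol (s1 ++ b :: s3).
Proof.
move=> ha hb; elim: s1 => [|c s1 IH]; first by rewrite !cat0s ecol_cons2 ha hb.
case: s1 IH => [|d s1] IH; first by rewrite !cat1s !ecol_cons2 ha hb !andbT.
have E : forall X, (c :: d :: s1) ++ X = c :: d :: (s1 ++ X) by [].
by rewrite !E !ecol_cons2 -!cat_cons IH.
Qed.

Definition rE (x y : sarr) := ~~ (isinr x && isinr y).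

Lemma ecol_id s : sorted rE s -> ecol s = s.
Proof.
elim: s => [|a s IH] //; case: s IH => [|b s] IH // H.
move: H; rewrite [sorted _ _]/= => /andP[h1 h2].
by rewrite ecol_cons2 (negbTE h1) IH.
Qed.

Lemma ecol_head s a : exists a' t, ecol (a :: s) = a' :: t /\ isinr a' = isinr a.
Proof.
elim: s a => [|b s IH] a; first by exists a, [::].
rewrite ecol_cons2; case: ifP => [/andP[ha hb]|_]; last by exists a, (ecol (b :: s)).
have [a' [t [-> e]]] := IH b. by exists a', t; rewrite e ha hb.
Qed.

Lemma ecol_sorted s : sorted rE (ecol s).
Proof.
case: s => // a s; elim: s a => [|b s IH] a //.
rewrite ecol_cons2; case: ifP => [_|h]; first exact: IH.
have [b' [t [e e']]] := ecol_head s b. move: (IH b); rewrite e /= => ->.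
by rewrite andbT /rE e' h.
Qed.

Lemma size_ind (P : seq sarr -> Prop) :
  (forall s, (forall s', (size s' < size s)%N -> P s') -> P s) -> forall s, P s.
Proof.
move=> H s; elim: {s}(size s).+1 {-2}s (ltnSn (size s)) => // n IH s Hs.
apply: H => s' hs'; apply: IH; exact: leq_trans hs' Hs.
Qed.

Lemma sorted_ecol (r : rel sarr) : (forall z w, isinr w -> r z w) ->
  forall s, sorted r (ecol s) = sorted r s.
Proof.
move=> Hr; apply: size_ind => s IH.
case hs: (sorted rE s); first by rewrite ecol_id.
have [s1 [a [b [s3 [E hab]]]]] := not_sorted_split (negbT hs).
move: hab; rewrite /rE negbK => /andP[ha hb].
rewrite E ecol_step // (@sorted_drop _ r isinr s1 a b s3 Hr ha hb). apply: IH.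
by rewrite E !size_cat /=; lia.
Qed.

Lemma valid_ecol v s : valid (v, s) -> valid (v, ecol s).
Proof.
elim/size_ind: s => s IH vs.
case hs: (sorted rE s); first by rewrite ecol_id.
have [s1 [a [b [s3 [E hab]]]]] := not_sorted_split (negbT hs).
move: hab; rewrite /rE negbK => /andP[ha hb].
move: vs; rewrite E ecol_step //.
case: a ha E => // i _ E; case: b hb E => // j _ E.
move=> vs; have ji := valid_inr vs; subst j.
apply: IH; first by rewrite E !size_cat /=; lia.
exact: valid_drop_loop vs.
Qed.

End Paths.


Section Alg.
Variables (k : fieldType) (Q0 Q1 : finType) (src tgt : Q1 -> Q0) (Sp : {set Q0}).
Local Notation sarr := (sarrow Q0 Q1).
Local Notation ssrc := (ssrc src).
Local Notation stgt := (stgt tgt).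
Local Notation valid := (rpath_valid src tgt Sp).
Local Notation qp := (qpath src tgt Sp).
Local Notation A := (pathalg src tgt Sp k).
Local Notation U p := (@mkmalgU qp k p 1).

Definition lin (h : qp -> A) (x : A) : A := \sum_(p <- msupp x) x@_p *: h p.

Lemma linEw h (x : A) (d : {fset qp}) : (msupp x `<=` d)%fset ->
  lin h x = \sum_(p <- d) x@_p *: h p.
Proof.
move=> sub; rewrite /lin; apply: big_fset_incl => // p _ H.
have /eqP -> : x@_p == 0 by rewrite mcoeff_eq0. by rewrite scale0r.
Qed.

Lemma lin_is_linear h : linear_for *:%R (lin h).
Proof.
move=> a x y /=. rewrite (linEw h (d := (msupp x `|` msupp y)%fset)); last first.
  apply: fsubset_trans (msuppD_le _ _) _; apply: fsetUSS => //; exact: msuppZ_le.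
rewrite (linEw h (x:=x) (d := (msupp x `|` msupp y)%fset)) ?fsubsetUl //.
rewrite (linEw h (x:=y) (d := (msupp x `|` msupp y)%fset)) ?fsubsetUr //.
rewrite scaler_sumr -big_split /=; apply: eq_bigr => p _.
by rewrite mcoeffD mcoeffZ scalerDl scalerA.
Qed.

HB.instance Definition _ h := GRing.isLinear.Build k A A *:%R (lin h) (lin_is_linear h).

Lemma coefU (x : k) (p q : qp) : (<< x *g p >> : A)@_q = x *+ (p == q).
Proof. exact: mcoeffU. Qed.
Lemma coefZ (c : k) (x : A) q : (c *: x)@_q = c * x@_q.
Proof. exact: mcoeffZ. Qed.

Lemma scaleU (c : k) (p : qp) : c *: (U p : A) = (<< c *g p >> : A).
Proof.
apply/malgP => q. rewrite coefZ [X in c * X](coefU 1 p q) (coefU c p q).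
by case: (p == q); rewrite ?mulr1n ?mulr0n ?mulr1 ?mulr0.
Qed.

Lemma linU h (p : qp) : lin h (U p) = h p.
Proof. by rewrite /lin msuppU oner_eq0 big_seq_fset1 mcoeffUU scale1r. Qed.

Lemma lin_ext h1 h2 (x : A) : (forall p, h1 p = h2 p) -> lin h1 x = lin h2 x.
Proof. by move=> e; apply: eq_bigr => p _; rewrite e. Qed.

Lemma lin_hB h1 h2 (x : A) : lin (fun p => h1 p - h2 p) x = lin h1 x - lin h2 x.
Proof. by rewrite /lin -sumrB; apply: eq_bigr => p _; rewrite scalerBr. Qed.

Lemma lin_id (x : A) : lin (fun p => U p) x = x.
Proof. by rewrite {2}(monalgE x) /lin; apply: eq_bigr => p _; rewrite scaleU. Qed.

Definition M (q p : qp) : A := match pcat q p with Some r => U r | None => 0 end.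

Lemma pmulE (x y : A) : pmul x y = lin (fun p => lin (fun q => M q p) y) x.
Proof.
rewrite /pmul /lin; apply: eq_bigr => p _; rewrite scaler_sumr.
by apply: eq_bigr => q _; rewrite scalerA.
Qed.

Lemma pmulU a b : pmul (U a) (U b) = M b a.
Proof. by rewrite pmulE !linU. Qed.

Lemma pmulBl (x y z : A) : pmul (x - y) z = pmul x z - pmul y z.
Proof. by rewrite !pmulE linearB. Qed.

Lemma pmulBr (x y z : A) : pmul z (x - y) = pmul z x - pmul z y.
Proof. by rewrite !pmulE -lin_hB; apply: lin_ext => p; rewrite linearB. Qed.

Lemma pmul0l (z : A) : pmul 0 z = 0.
Proof. by rewrite pmulE linear0. Qed.

Lemma val_insubd (u0 : qp) r : valid r -> val (insubd u0 r) = r.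
Proof. by move=> H; rewrite insubdK. Qed.

Lemma pcatS (q p r : qp) : pcat q p = Some r -> val r = ((val q).1, (val q).2 ++ (val p).2).
Proof. rewrite /pcat; case: ifP => // _; case: insubP => // u _ e [<-]; exact: e. Qed.

Lemma pcat_none (q p : qp) : rpath_end tgt (val q) != (val p).1 -> pcat q p = None.
Proof. by rewrite /pcat => /negbTE ->. Qed.

Lemma valid2 (q p : qp) : rpath_end tgt (val q) = (val p).1 ->
  valid ((val q).1, (val q).2 ++ (val p).2).
Proof.
case: q => [[v s] vq]; case: p => [[w t] vp] /=; rewrite pendE => e.
by rewrite valid_cat vq e vp.
Qed.

Lemma pcat_some (q p : qp) : rpath_end tgt (val q) = (val p).1 ->
  exists r, pcat q p = Some r /\ val r = ((val q).1, (val q).2 ++ (val p).2).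
Proof.
move=> e; have V := valid2 e.
rewrite /pcat e eqxx insubT; by eexists; split.
Qed.

Definition catq (b u a : qp) : qp :=
  insubd b ((val b).1, (val b).2 ++ (val u).2 ++ (val a).2).
Definition pc3 (a u b : qp) :=
  (rpath_end tgt (val u) == (val a).1) && (rpath_end tgt (val b) == (val u).1).

Lemma val_catq a u b : pc3 a u b ->
  val (catq b u a) = ((val b).1, (val b).2 ++ (val u).2 ++ (val a).2).
Proof.
move=> h; apply: val_insubd; move: h; rewrite /pc3.
case: a => [[va1 va2] Ha]; case: u => [[vu1 vu2] Hu]; case: b => [[vb1 vb2] Hb] /=.
rewrite !pendE => /andP[/eqP e1 /eqP e2].
by rewrite valid_cat Hb e2 valid_cat Hu e1 Ha.
Qed.

Lemma pmul3E a u b :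
  pmul (pmul (U a) (U u)) (U b) = if pc3 a u b then U (catq b u a) else 0.
Proof.
rewrite pmulU /M /pc3.
case: (boolP (rpath_end tgt (val u) == (val a).1)) => h1 /=; last first.
  by rewrite pcat_none // pmul0l.
have [r [-> vr]] := pcat_some (eqP h1). rewrite pmulU /M.
case: (boolP (rpath_end tgt (val b) == (val u).1)) => h2; last by rewrite pcat_none // vr.
have e2 : rpath_end tgt (val b) = (val r).1 by rewrite vr (eqP h2).
have [r' [-> vr']] := pcat_some e2.
have E : r' = catq b u a.
  by apply: val_inj; rewrite val_catq /pc3 ?h1 ?h2 // vr' vr.
by rewrite E.
Qed.

Section Ideal.
Variable X : A -> Prop.
Local Notation J := (gen_ideal X).

Lemma J0 : J 0.
Proof. by exists [::]; split => //; rewrite big_nil. Qed.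

Lemma JD x y : J x -> J y -> J (x + y).
Proof.
move=> [s1 [h1 ->]] [s2 [h2 ->]]; exists (s1 ++ s2); split; last by rewrite big_cat.
by move=> t; rewrite mem_cat => /orP[/h1|/h2].
Qed.

Lemma JZ c x : J x -> J (c *: x).
Proof.
move=> [s [h ->]]; exists (map (fun t => (c * t.1.1.1, t.1.1.2, t.1.2, t.2)) s); split.
  by move=> t /mapP[t0 /h H ->].
by rewrite big_map scaler_sumr; apply: eq_bigr => t _; rewrite scalerA.
Qed.

Lemma JN x : J x -> J (- x).
Proof. by move=> h; rewrite -scaleN1r; apply: JZ. Qed.

Lemma JB x y : J x -> J y -> J (x - y).
Proof. by move=> hx hy; apply: JD => //; apply: JN. Qed.

Lemma Jsum (T : Type) (r : seq T) (P : pred T) (F : T -> A) :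
  (forall i, P i -> J (F i)) -> J (\sum_(i <- r | P i) F i).
Proof. by move=> h; apply: big_ind => //; [exact: J0 | exact: JD]. Qed.

Lemma Jgen a x b : X x -> J (pmul (pmul (U a) x) (U b)).
Proof.
move=> hx; exists [:: (1, a, x, b)]; split; first by move=> t; rewrite inE => /eqP ->.
by rewrite big_seq1 scale1r.
Qed.
End Ideal.

End Alg.


Section Main.
Variables (k : fieldType) (Q0 Q1 : finType) (src tgt : Q1 -> Q0) (Sp : {set Q0}).
Variable (I : pred (rpath Q0 Q1)).
Hypothesis HI1 : forall r, I r -> rpath_valid src tgt Sp r /\
   all (fun a => if a is inl _ then true else false) r.2.
Hypothesis HI2 : forall r, I r -> size r.2 = 2%N.
Local Notation sarr := (sarrow Q0 Q1).
Local Notation ssrc := (ssrc src).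
Local Notation stgt := (stgt tgt).
Local Notation valid := (rpath_valid src tgt Sp).
Local Notation qp := (qpath src tgt Sp).
Local Notation A := (pathalg src tgt Sp k).
Local Notation U p := (@mkmalgU qp k p 1).
Local Notation rE := (@rE Q0 Q1).

Definition rI (x y : sarr) := ~~ I (ssrc x, [:: x; y]).

Lemma rI_inr z w : isinr w -> rI z w.
Proof.
rewrite /rI => hw; apply/negP => /HI1 [_] /=.
by case: z; case: w hw.
Qed.

Definition colq (p : qp) : qp := insubd p ((val p).1, ecol (val p).2).

Lemma val_colq p : val (colq p) = ((val p).1, ecol (val p).2).
Proof.
have V : valid ((val p).1, ecol (val p).2) by case: p => [[v s] H] /=; exact: valid_ecol.
by rewrite /colq insubdK.
Qed.

Definition g (p : qp) : A := if sorted rI (val p).2 then U (colq p) else 0.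
Local Notation f := (lin g).
Definition nrm (p : qp) := sorted rI (val p).2 && sorted rE (val p).2.

Lemma nrm_colq p : sorted rI (val p).2 -> nrm (colq p).
Proof. by move=> h; rewrite /nrm val_colq /= (sorted_ecol rI_inr) h ecol_sorted. Qed.

Lemma g_nrm p : nrm p -> g p = U p.
Proof.
case/andP=> h1 h2; rewrite /g h1.
have -> : colq p = p by apply: val_inj; rewrite val_colq ecol_id //; case: (val p).
by [].
Qed.

Lemma g_eq (r1 r2 : qp) : (val r1).1 = (val r2).1 -> ecol (val r1).2 = ecol (val r2).2 ->
  sorted rI (val r1).2 = sorted rI (val r2).2 -> g r1 = g r2.
Proof.
move=> e1 e2 e3; rewrite /g e3.
have -> : colq r1 = colq r2 by apply: val_inj; rewrite !val_colq e1 e2.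
by [].
Qed.

Lemma coefD (x y : A) q : (x + y)@_q = x@_q + y@_q.
Proof. exact: mcoeffD. Qed.
Lemma coef0 q : (0 : A)@_q = 0.
Proof. exact: mcoeff0. Qed.

Lemma coef_sum (T : Type) (r : seq T) (P : pred T) (F : T -> A) q :
  (forall i, P i -> (F i)@_q = 0) -> (\sum_(i <- r | P i) F i)@_q = 0.
Proof.
move=> h; apply: (big_ind (fun y : A => y@_q = 0)) => //; first exact: coef0.
by move=> y1 y2 h1 h2; rewrite coefD h1 h2 addr0.
Qed.

Lemma coefU_ne (r q : qp) : r != q -> (U r)@_q = 0.
Proof. by move=> /negbTE h; rewrite (coefU 1 r q) h. Qed.

Lemma coef_f_nonnrm (x : A) q : ~~ nrm q -> (f x)@_q = 0.
Proof.
move=> hq; rewrite /lin; apply: coef_sum => p _.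
rewrite coefZ /g; case: ifP => h; last by rewrite coef0 mulr0.
rewrite coefU_ne ?mulr0 //; apply/eqP => e.
by move: hq; rewrite -e nrm_colq.
Qed.

Lemma nonnrm_split (r : qp) s1 x y s3 : (val r).2 = s1 ++ x :: y :: s3 ->
  ~~ rI x y \/ ~~ rE x y -> ~~ nrm r.
Proof.
move=> e h; rewrite /nrm e negb_and.
by case: h => h; apply/orP; [left|right]; apply: sorted_split_bad.
Qed.

Lemma I_shape (u : qp) : I (val u) -> exists x y, val u = (ssrc x, [:: x; y]) /\ ~~ rI x y.
Proof.
case: u => [[w s] H] /= hI; have := HI2 hI; case: s H hI => [|x [|y [|z s]]] //= H hI _.
have ex := valid_head H; subst w; exists x, y; split => //.
by rewrite /rI negbK.
Qed.

Lemma coef3 (a u b q : qp) x y : nrm q -> (val u).2 = [:: x; y] ->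
  ~~ rI x y \/ ~~ rE x y -> (pmul (pmul (U a) (U u)) (U b))@_q = 0.
Proof.
move=> hq eu hxy; rewrite pmul3E; case: ifP => h; last exact: coef0.
apply: coefU_ne; apply/eqP => e.
have := @nonnrm_split (catq b u a) (val b).2 x y (val a).2.
rewrite val_catq // eu => /(_ erefl hxy).
by rewrite e hq.
Qed.

Lemma Jsp_coef (y : A) : gen_ideal (gens_sp I) y -> forall q, nrm q -> y@_q = 0.
Proof.
move=> [s [hs ->]] q hq; rewrite big_seq; apply: coef_sum => t /hs ht.
rewrite coefZ; suff -> : (pmul (pmul (U t.1.1.2) t.1.2) (U t.2))@_q = 0 by rewrite mulr0.
case: ht => [[u [hu ->]] | [i [p2 [e2 ->]]]].
- have [x [z [eu hxy]]] := I_shape hu.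
  by apply: (@coef3 _ _ _ _ x z) => //; [rewrite eu | left].
- apply: (@coef3 _ _ _ _ (inr i) (inr i)) => //; first by rewrite e2.
  by right.
Qed.

Lemma sorted_rI_drop s1 i s3 :
  sorted rI (s1 ++ inr i :: inr i :: s3) = sorted rI (s1 ++ inr i :: s3).
Proof.
case: s1 => [|c s1] /=; first by rewrite rI_inr.
by rewrite !cat_path /= !rI_inr.
Qed.

Lemma f_U (p : qp) : f (U p) = g p.
Proof. exact: linU. Qed.

Lemma f_gen (a : qp) (x : A) (b : qp) : gens_sg I x -> f (pmul (pmul (U a) x) (U b)) = 0.
Proof.
case=> [[u [hu ->]] | [i [p2 [p1 [e2 [e1 ->]]]]]].
- rewrite pmul3E; case: ifP => h; last exact: linear0.
  rewrite f_U /g; have [x0 [y0 [eu hxy]]] := I_shape hu.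
  rewrite ifF //; apply/negbTE; rewrite val_catq //= eu; exact: sorted_split_bad.
- rewrite pmulBr pmulBl [X in f (X - _)]pmul3E [X in f (_ - X)]pmul3E.
  have E : pc3 a p1 b = pc3 a p2 b by rewrite /pc3 e1 e2.
  rewrite E; case h2: (pc3 a p2 b); last by rewrite /= subr0 linear0.
  have h1 : pc3 a p1 b by rewrite E.
  rewrite linearB [X in X - _]f_U [X in _ - X]f_U; apply/eqP; rewrite subr_eq0; apply/eqP.
  apply: g_eq; rewrite (val_catq h2) (val_catq h1) e2 e1 //=.
  + exact: ecol_step.
  + exact: sorted_rI_drop.
Qed.

Lemma f_J (x : A) : gen_ideal (gens_sg I) x -> f x = 0.
Proof.
move=> [s [hs ->]]; rewrite linear_sum big_seq big1 // => t /hs ht.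
rewrite linearZ /=. by rewrite f_gen // scaler0.
Qed.

Lemma factor3 (p : qp) s1 s2 s3 : (val p).2 = s1 ++ s2 ++ s3 ->
  exists a u b : qp, [/\ val b = ((val p).1, s1), val u = (pend' tgt (val p).1 s1, s2),
     val a = (pend' tgt (pend' tgt (val p).1 s1) s2, s3), pc3 a u b & catq b u a = p].
Proof.
case: p => [[v s] H] /= E; subst s.
have /andP[Hb Hr] : valid (v, s1) && valid (pend' tgt v s1, s2 ++ s3) by rewrite -valid_cat.
have /andP[Hu Ha] : valid (pend' tgt v s1, s2) && valid (pend' tgt (pend' tgt v s1) s2, s3).
  by rewrite -valid_cat.
pose a : qp := exist (fun r => valid r) _ Ha.
pose u : qp := exist (fun r => valid r) _ Hu.
pose b : qp := exist (fun r => valid r) _ Hb.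
exists a, u, b.
have h : pc3 a u b by rewrite /pc3 /= !pendE !eqxx.
split => //. apply: val_inj. by rewrite val_catq.
Qed.

Lemma U_I (X : A -> Prop) : (forall u : qp, I (val u) -> X (U u)) ->
  forall (p : qp) s1 x y s3, (val p).2 = s1 ++ x :: y :: s3 -> ~~ rI x y ->
  gen_ideal X (U p).
Proof.
move=> hX p s1 x y s3 E hxy.
have [a [u [b [eb eu ea h ec]]]] := @factor3 p s1 [:: x; y] s3 E.
have E3 : pmul (pmul (U a) (U u)) (U b) = U p by rewrite pmul3E h ec.
rewrite -E3; apply: Jgen; apply: hX.
have vu := valP u; rewrite eu in vu; have ex := valid_head vu.
by rewrite eu -ex; rewrite /rI negbK in hxy.
Qed.

Lemma U_eps (p : qp) s1 i s3 : (val p).2 = s1 ++ inr i :: inr i :: s3 ->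
  exists p' : qp, val p' = ((val p).1, s1 ++ inr i :: s3) /\
     gen_ideal (gens_sg I) (U p - U p').
Proof.
move=> E.
have [a [u [b [eb eu ea h ec]]]] := @factor3 p s1 [:: inr i; inr i] s3 E.
have vu := valP u; rewrite eu in vu.
have wi : pend' tgt (val p).1 s1 = i by rewrite -(valid_head vu).
rewrite wi in vu.
have v1 : valid (i, [:: inr i]).
  by move: vu; rewrite -[[:: inr i; inr i]]/([:: inr i] ++ [:: inr i]) valid_cat => /andP[].
pose p1 : qp := exist (fun r => valid r) _ v1.
have ep1 : val p1 = (i, [:: inr i]) by [].
clearbody p1.
have h1 : pc3 a p1 b by rewrite /pc3 ea eb ep1 /= pendE wi !eqxx.
exists (catq b p1 a); split; first by rewrite val_catq // eb ea ep1.
have E2 : pmul (pmul (U a) (U u)) (U b) = U p by rewrite pmul3E h ec.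
have E1 : pmul (pmul (U a) (U p1)) (U b) = U (catq b p1 a).
  rewrite pmul3E h1; reflexivity.
have -> : U p - U (catq b p1 a) = pmul (pmul (U a) (U u - U p1)) (U b).
  rewrite pmulBr pmulBl.
  exact: (f_equal2 (fun x y : A => x - y) (esym E2) (esym E1)).
apply: Jgen; right; exists i, u, p1; split => //.
by rewrite eu wi.
Qed.

Lemma telesc (x y z : A) : (x - y) + (y - z) = x - z.
Proof. by rewrite addrA subrK. Qed.

Lemma addKr' (x y : A) : x + y - x = y.
Proof. by rewrite addrC addKr. Qed.

Lemma vpair (p : qp) : valid ((val p).1, (val p).2).
Proof. by case: p => [[v s] H]. Qed.

Lemma UgJ_aux n : forall p : qp, (size (val p).2 < n)%N ->
  gen_ideal (gens_sg I) (U p - g p).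
Proof.
elim: n => // n IH p hs.
case hI: (sorted rI (val p).2); last first.
  have [s1 [x [y [s3 [E hxy]]]]] := not_sorted_split (negbT hI).
  rewrite /g hI /= subr0.
  apply: (U_I _ E hxy) => u hu; left; exists u; split; [exact: hu | reflexivity].
case hE: (sorted rE (val p).2).
  rewrite g_nrm; last by rewrite /nrm hI hE.
  rewrite subrr; exact: J0.
have [s1 [a [b [s3 [E hab]]]]] := not_sorted_split (negbT hE).
move: hab; rewrite /rE negbK => /andP[].
case: a E => // i E _; case: b E => // j E _.
have vp := vpair p; rewrite E in vp; have ji := valid_inr vp; subst j.
have [p' [ep' hp']] := U_eps E.
have gpp : g p = g p'.
  apply: g_eq; rewrite ep' //= E; [exact: ecol_step | exact: sorted_rI_drop].
have hs' : (size (val p').2 < n)%N.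
  by move: hs; rewrite ep' E /= !size_cat /=; lia.
have := JD hp' (IH p' hs'); rewrite telesc -gpp; exact.
Qed.

Lemma UgJ (p : qp) : gen_ideal (gens_sg I) (U p - g p).
Proof. exact: (@UgJ_aux (size (val p).2).+1). Qed.

Lemma x_fx (x : A) : gen_ideal (gens_sg I) (x - f x).
Proof.
rewrite -{1}(lin_id x) -lin_hB /lin.
apply: Jsum => p _; apply: JZ; exact: UgJ.
Qed.

Lemma nonnrm_Jsp (q : qp) : ~~ nrm q -> gen_ideal (gens_sp I) (U q).
Proof.
rewrite /nrm negb_and => /orP[h|h].
- have [s1 [x [y [s3 [E hxy]]]]] := not_sorted_split h.
  apply: (U_I _ E hxy) => u hu; left; exists u; split; [exact: hu | reflexivity].
- have [s1 [a [b [s3 [E hab]]]]] := not_sorted_split h.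
  move: hab; rewrite /rE negbK => /andP[].
  case: a E => // i E _; case: b E => // j E _.
  have vp := vpair q; rewrite E in vp; have ji := valid_inr vp; subst j.
  have [a [u [b [eb eu ea h3 ec]]]] := @factor3 q s1 [:: inr i; inr i] s3 E.
  have E3 : pmul (pmul (U a) (U u)) (U b) = U q.
    rewrite pmul3E h3 ec; reflexivity.
  rewrite -E3; apply: Jgen; right; exists i, u; split; last reflexivity.
  have vu := valP u; rewrite eu in vu.
  by rewrite eu -(valid_head vu).
Qed.

Lemma surj (y : A) : exists x, gen_ideal (gens_sp I) (y - f x).
Proof.
exists (\sum_(q <- msupp y | nrm q) y@_q *: U q).
have -> : f (\sum_(q <- msupp y | nrm q) y@_q *: U q) =
          \sum_(q <- msupp y | nrm q) y@_q *: U q.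
  rewrite linear_sum; apply: eq_bigr => q hq; rewrite linearZ /= f_U g_nrm //.
have ey : y = \sum_(q <- msupp y) y@_q *: U q := esym (lin_id y).
rewrite {1}ey (bigID nrm) /= addKr'.
apply: Jsum => q hq; apply: JZ; exact: nonnrm_Jsp.
Qed.

Lemma iso_main : quot_iso (gen_ideal (@gens_sg Q0 Q1 src tgt Sp k I))
  (gen_ideal (@gens_sp Q0 Q1 src tgt Sp k I)).
Proof.
exists (lin g); split => [x|y]; last exact: surj.
split => [H|H].
- have f0 : f x = 0.
    apply/malgP => q; rewrite coef0.
    case hq: (nrm q); [exact: Jsp_coef H q hq | exact: coef_f_nonnrm (negbT hq)].
  by move: (x_fx x); rewrite f0 subr0.
- rewrite /= (f_J H); exact: J0.
Qed.

End Main.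

Section Transfer.
Variables (k : fieldType) (Q0 Q1 : finType) (src tgt : Q1 -> Q0) (Sp : {set Q0}).
Local Notation A := (pathalg src tgt Sp k).

Lemma findim_transfer (J1 J2 : A -> Prop) (phi : {linear A -> A}) :
  J2 0 -> (forall x y, J2 x -> J2 y -> J2 (x + y)) -> (forall c x, J2 x -> J2 (c *: x)) ->
  (forall x, J2 (phi x) <-> J1 x) -> (forall y, exists x, J2 (y - phi x)) ->
  quot_findim J1 <-> quot_findim J2.
Proof.
move=> h0 hD hZ hiso hsurj; split.
- move=> [n [b hb]]; exists n, (fun i => phi (b i)) => y.
  have [x hx] := hsurj y; have [c hc] := hb x; exists c.
  have h2 : J2 (phi (x - \sum_(i < n) c i *: b i)) := (hiso _).2 hc.
  rewrite linearB linear_sum /= in h2.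
  rewrite (eq_bigr (fun i => c i *: phi (b i))) in h2; last by move=> i _; rewrite linearZ.
  have := hD _ _ hx h2; rewrite telesc; exact.
- move=> [n [b hb]].
  have hc : forall i, exists x, J2 (b i - phi x) := fun i => hsurj (b i).
  pose xb i := proj1_sig (constructive_indefinite_description _ (hc i)).
  have hxb : forall i, J2 (b i - phi (xb i)).
    move=> i; exact: (proj2_sig (constructive_indefinite_description _ (hc i))).
  exists n, xb => x; have [c hcx] := hb (phi x); exists c.
  apply/hiso; rewrite linearB linear_sum /=.
  rewrite (eq_bigr (fun i => c i *: phi (xb i))); last by move=> i _; rewrite linearZ.
  have hs : J2 (\sum_(i < n) c i *: (b i - phi (xb i))).
    by apply: big_ind => // i _; apply: hZ.
  rewrite (eq_bigr _ (fun i _ => scalerBr _ _ _)) sumrB in hs.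
  have := hD _ _ hcx hs; rewrite telesc; exact.
Qed.
End Transfer.

Theorem mainTheorem2 (k : closedFieldType) (Q0 Q1 : finType) (src tgt : Q1 -> Q0)
  (Sp : {set Q0}) (I : pred (rpath Q0 Q1)) :
  skew_gentle src tgt Sp I ->
  quot_iso (gen_ideal (@gens_sg Q0 Q1 src tgt Sp k I))
           (gen_ideal (@gens_sp Q0 Q1 src tgt Sp k I)) /\
  (quot_findim (gen_ideal (@gens_sg Q0 Q1 src tgt Sp k I)) <->
   quot_findim (gen_ideal (@gens_sp Q0 Q1 src tgt Sp k I))).
Proof.
case=> HI; rewrite /gentle_sp => -[_ [_ [G2 _]]].
have HI2 : forall r, I r -> size r.2 = 2%N.
  by move=> r hr; apply: G2; rewrite /Isp hr.
have iso := @iso_main k Q0 Q1 src tgt Sp I HI HI2.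
split => //.
case: iso => phi [h1 h2].
apply: (findim_transfer (phi := phi)) => //.
- exact: J0.
- by move=> x y; apply: JD.
- by move=> c x; apply: JZ.
Qed.
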